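(* Let $D=(S\uplus I,A)$ be a directed acyclic graph whose vertex set is partitioned into a set $S$ and a set $I$ of internal vertices, and let $T\subseteq I$ be a set of vertices that are pairwise false twins in $D$. Then among the total elimination sequences of $D$ of minimum cost there is one in which the vertices of $T$ are eliminated consecutively (i.e., they form a contiguous block of the sequence).
   Context: For a DAG $D$ and a vertex $v$, $N^-_D(v)$ and $N^+_D(v)$ are the open in- and out-neighborhoods, and the Markowitz degree is $\mu_D(v)=|N^-_D(v)|\cdot|N^+_D(v)|$. Two vertices $u,v$ are false twins if $N^-_D(u)=N^-_D(v)$ and $N^+_D(u)=N^+_D(v)$. Eliminating $v$ produces $D_{/v}$: delete $v$ and add every arc $(x,y)$ with $x\in N^-_D(v)$, $y\in N^+_D(v)$ not already present. For a sequence $\sigma=(v_1,\dots,v_\ell)$ of distinct internal vertices, $D_\sigma=(((D_{/v_1})_{/v_2})\dots)_{/v_\ell}$; $\sigma$ is total if $\ell=|I|$. The cost of $\sigma$ is $\sum_{i=1}^{\ell}\mu_{D_{(v_1,\dots,v_{i-1})}}(v_i)$, the sum of Markowitz degrees of each vertex at the moment it is eliminated. *)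

(* Defs.v *)
(* A DAG on a finite vertex type V is represented by its arc
   set A : {set V * V}; the vertex set is all of V, partitioned into the
   internal vertices I : {set V} and S := ~: I. *)
From mathcomp Require Import all_boot.
Set Implicit Arguments.
Unset Strict Implicit.
Unset Printing Implicit Defensive.

Section Elim.
Variable V : finType.

Definition arcrel (A : {set V * V}) : rel V := fun x y => (x, y) \in A.

Definition acyclic (A : {set V * V}) : Prop :=
  forall x y, (x, y) \in A -> ~~ connect (arcrel A) y x.

Definition Nin (A : {set V * V}) (v : V) : {set V} := [set x | (x, v) \in A].
Definition Nout (A : {set V * V}) (v : V) : {set V} := [set y | (v, y) \in A].

Definition markowitz (A : {set V * V}) (v : V) : nat := #|Nin A v| * #|Nout A v|.

Definition elim (A : {set V * V}) (v : V) : {set V * V} :=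
  [set e in A | (e.1 != v) && (e.2 != v)] :|: setX (Nin A v) (Nout A v).

Fixpoint elim_seq (A : {set V * V}) (s : seq V) : {set V * V} :=
  if s is v :: s' then elim_seq (elim A v) s' else A.

Fixpoint cost (A : {set V * V}) (s : seq V) : nat :=
  if s is v :: s' then markowitz A v + cost (elim A v) s' else 0.

Definition total_seq (I : {set V}) (s : seq V) : Prop := perm_eq s (enum I).

Definition false_twins (A : {set V * V}) (u v : V) : Prop :=
  Nin A u = Nin A v /\ Nout A v = Nout A u.

End Elim.

(* Main.v *)
Require Import Defs.
From mathcomp Require Import all_boot.
From mathcomp Require Import zify.
Set Implicit Arguments.
Unset Strict Implicit.
Unset Printing Implicit Defensive.

Lemma arith n f0 f1 g0 g1 (e h : bool) : f0 <= f1 -> g0 <= g1 -> ~~ (e && h) ->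
  f1 * g1 + n * ((f0 + e * n.+1) * (g0 + h * n.+1)) <=
  n.+1 * ((f1 + e * n) * (g1 + h * n)).
Proof.
move=> Hf Hg; have Hfg : f0 * g0 <= f1 * g1 by apply: leq_mul.
case: e; case: h => //= _; rewrite ?mul1n ?mul0n ?addn0; nia.
Qed.

Section Aux.
Variable V : finType.
Implicit Types (G X Y Z : {set V * V}) (R : {set V}).

Lemma in_elim G a p q :
  ((p, q) \in elim G a) =
  (((p, q) \in G) && (p != a) && (q != a)) || (((p, a) \in G) && ((a, q) \in G)).
Proof. by rewrite /elim !inE /= andbA. Qed.

Lemma twin_in G u v y : false_twins G u v -> ((y, u) \in G) = ((y, v) \in G).
Proof. by case=> H _; move: (congr1 (fun S : {set V} => y \in S) H); rewrite !inE. Qed.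

Lemma twin_out G u v y : false_twins G u v -> ((u, y) \in G) = ((v, y) \in G).
Proof. by case=> _ H; move: (congr1 (fun S : {set V} => y \in S) H); rewrite !inE. Qed.

Lemma acyc_noloop G y : acyclic G -> ((y, y) \in G) = false.
Proof. by move=> Ha; apply/negP=> H; move: (Ha _ _ H); rewrite connect0. Qed.

Lemma acyc_no2 G y z : acyclic G -> (y, z) \in G -> (z, y) \in G -> False.
Proof. by move=> Ha H1 H2; move: (Ha _ _ H1); rewrite connect1. Qed.

Lemma acyclic_elim G w : acyclic G -> acyclic (elim G w).
Proof.
move=> Ha x y; rewrite in_elim.
have sub : subrel (connect (arcrel (elim G w))) (connect (arcrel G)).
  apply: connect_sub => p q; rewrite /arcrel in_elim => /orP[/andP[/andP[H _] _]|/andP[H1 H2]].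
    exact: connect1.
  by apply: connect_trans (connect1 H1) (connect1 H2).
case/orP=> [/andP[/andP[H _] _]|/andP[H1 H2]]; apply/negP => /sub C.
  by move: (Ha _ _ H); rewrite C.
move: (Ha _ _ H1); rewrite (connect_trans (connect1 (e:=arcrel G) H2) C) //.
Qed.

Lemma twins_elim G u v w : false_twins G u v -> w != u -> w != v ->
  false_twins (elim G w) u v.
Proof.
move=> Ht wu wv; split; apply/setP=> y; rewrite !inE /=
  ?(twin_in y Ht) ?(twin_in w Ht) ?(twin_out y Ht) ?(twin_out w Ht).
  by rewrite !(eq_sym _ w) wu wv.
by rewrite !(eq_sym _ w) wu wv.
Qed.

Lemma elim_twins G t q b :
  uniq (t :: q) ->
  (forall u v, u \in t :: q -> v \in t :: q -> false_twins G u v) ->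
  (forall u, u \in t :: q -> ((u, u) \in G) = false) ->
  cost G ((t :: q) ++ b) = (size q).+1 * markowitz G t + cost (elim_seq G (t :: q)) b /\
  forall y z, ((y, z) \in elim_seq G (t :: q)) =
    (((y, z) \in G) && (y \notin t :: q) && (z \notin t :: q)) || (((y, t) \in G) && ((t, z) \in G)).
Proof.
elim: q G t => [|u q IH] G t Hu Htw Hl.
  split; first by rewrite /= mul1n.
  by move=> y z; rewrite /= in_elim !mem_seq1.
have noadj : forall v w, v \in t :: u :: q -> w \in t :: u :: q -> ((v, w) \in G) = false.
  by move=> v w Hv Hw; rewrite (twin_in v (Htw w v Hw Hv)) Hl.
have tq : t \notin u :: q by case/andP: Hu.
have Hu' : uniq (u :: q) by case/andP: Hu.
have tt : t \in t :: u :: q by rewrite inE eqxx.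
have uu : u \in t :: u :: q by rewrite !inE eqxx orbT.
have Htw' : forall v w, v \in u :: q -> w \in u :: q -> false_twins (elim G t) v w.
  move=> v w Hv Hw; apply: twins_elim; first by apply: Htw; rewrite inE ?Hv ?Hw orbT.
    by apply/eqP=> E; move: tq; rewrite E Hv.
  by apply/eqP=> E; move: tq; rewrite E Hw.
have Hl' : forall v, v \in u :: q -> ((v, v) \in elim G t) = false.
  move=> v Hv; have Hv2 : v \in t :: u :: q by rewrite inE Hv orbT.
  by rewrite in_elim Hl ?noadj // andbF.
have Nin1 : forall y, ((y, u) \in elim G t) = ((y, t) \in G).
  move=> y; rewrite in_elim (noadj t u) // andbF orbF (twin_in y (Htw u t uu tt)).
  case: (y =P t) => [->|_]; first by rewrite (noadj t t).
  by rewrite andbT; apply/andP/idP => [[]|->]//; split => //; apply/eqP => E; move: tq; rewrite -E inE eqxx.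
have Nout1 : forall y, ((u, y) \in elim G t) = ((t, y) \in G).
  move=> y; rewrite in_elim (noadj u t) // andFb orbF (twin_out y (Htw u t uu tt)).
  case: (y =P t) => [->|_]; first by rewrite (noadj t t) // andbF.
  by rewrite andbT; apply/andP/idP => [[]|->]//; split => //; apply/eqP => E; move: tq; rewrite -E inE eqxx.
have M1 : markowitz (elim G t) u = markowitz G t.
  rewrite /markowitz.
  have -> : Nin (elim G t) u = Nin G t by apply/setP => y; move: (Nin1 y); rewrite !inE.
  have -> : Nout (elim G t) u = Nout G t by apply/setP => y; move: (Nout1 y); rewrite !inE.
  done.
have [IHc IHf] := IH (elim G t) u Hu' Htw' Hl'.
split.
  have -> : cost G ((t :: u :: q) ++ b) = markowitz G t + cost (elim G t) ((u :: q) ++ b) by [].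
  by rewrite IHc M1 /= mulSn addnA.
move=> y z; rewrite [elim_seq _ _]/= IHf Nin1 Nout1 in_elim.
rewrite (in_cons t (u :: q) y) (in_cons t (u :: q) z).
case: ((y, t) \in G); case: ((t, z) \in G); rewrite ?orbT //= ?orbF ?andbF ?andbT.
by case: ((y, z) \in G); case: (y == t); case: (z == t); case: (y \in u :: q); case: (z \in u :: q).
by case: ((y, z) \in G); case: (y == t); case: (z == t); case: (y \in u :: q); case: (z \in u :: q).
by case: ((y, z) \in G); case: (y == t); case: (z == t); case: (y \in u :: q); case: (z \in u :: q).
Qed.

Record inv R (x t0 : V) X Y Z : Prop := Inv {
  ix : x \in R; it0 : t0 \in R :\ x;
  iXac : acyclic X; iZac : acyclic Z;
  iXtw : forall u v, u \in R :\ x -> v \in R :\ x -> false_twins X u v;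
  iZtw : forall u v, u \in R -> v \in R -> false_twins Z u v;
  iY3 : forall a b, (a, b) \in Y -> (a \notin R) && (b \notin R);
  iY4 : forall a b, a \notin R -> b \notin R -> ((a, b) \in Y) = ((a, b) \in X);
  i5 : forall a b, a \notin R -> b \notin R -> (a, b) \in Z -> (a, b) \in X;
  i6 : forall a b, a \notin R -> b \notin R -> (a, b) \in X ->
         ((a, b) \in Z) || (((a, t0) \in Z) && ((t0, b) \in Z));
  i7 : forall a, a \notin R -> ((a, t0) \in X) = ((a, t0) \in Z) /\ ((t0, a) \in X) = ((t0, a) \in Z);
  i8 : forall a b, (a, t0) \in X -> (t0, b) \in X -> (a, b) \in X;
  i9 : forall a, ((a, x) \in X) = false /\ ((x, a) \in X) = false }.

Lemma inv_elim R x t0 X Y Z a : inv R x t0 X Y Z -> a \notin R ->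
  inv R x t0 (elim X a) (elim Y a) (elim Z a).
Proof.
case=> Hx Ht0 HXa HZa HXt HZt H3 H4 H5 H6 H7 H8 H9 aR.
have t0R : t0 \in R by move: Ht0; rewrite inE => /andP[].
have t0a : t0 != a by apply/eqP => E; move: aR; rewrite -E t0R.
have no2 := acyc_no2 HZa.
split => //.
- exact: acyclic_elim.
- exact: acyclic_elim.
- move=> u v Hu Hv; apply: twins_elim; first exact: HXt.
    by apply/eqP => E; move: Hu; rewrite -E inE => /andP[_]; rewrite (negbTE aR).
  by apply/eqP => E; move: Hv; rewrite -E inE => /andP[_]; rewrite (negbTE aR).
- move=> u v Hu Hv; apply: twins_elim; first exact: HZt.
    by apply/eqP => E; move: Hu; rewrite -E (negbTE aR).
  by apply/eqP => E; move: Hv; rewrite -E (negbTE aR).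
- move=> p q; rewrite in_elim => /orP[/andP[/andP[/H3 //]]|/andP[/H3/andP[-> _] /H3/andP[_ ->]]] //.
- by move=> p q pR qR; rewrite !in_elim H4 // (H4 _ _ pR aR) (H4 _ _ aR qR).
- move=> p q pR qR; rewrite !in_elim => /orP[/andP[/andP[/(H5 _ _ pR qR) -> ->] ->]//|/andP[/(H5 _ _ pR aR) -> /(H5 _ _ aR qR) ->]];
    by rewrite orbT.
- move=> p q pR qR; rewrite !in_elim => /orP[/andP[/andP[Hpq pa] qa]|/andP[Hpa Haq]].
    case/orP: (H6 _ _ pR qR Hpq) => [->|/andP[Hp Hq]]; first by rewrite pa qa.
    by rewrite Hp Hq pa qa t0a !orbT.
  case/orP: (H6 _ _ pR aR Hpa) => [Zpa|/andP[Zpt Zta]];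
  case/orP: (H6 _ _ aR qR Haq) => [Zaq|/andP[Zat Ztq]].
  + by rewrite Zpa Zaq !orbT.
  + have qa : q != a by apply/eqP => E; rewrite E in Ztq; case: (no2 _ _ Zat Ztq).
    by rewrite Zpa Zat Ztq qa t0a !orbT.
  + have pa : p != a by apply/eqP => E; rewrite E in Zpt; case: (no2 _ _ Zpt Zta).
    by rewrite Zpt Zta Zaq pa t0a !orbT.
  + by case: (no2 _ _ Zat Zta).
- move=> p pR; rewrite !in_elim t0a /= ?andbT.
  have [E1 E2] := H7 _ pR; have [E3 E4] := H7 _ aR.
  rewrite E1 E2 E3 E4; split.
    case Zat: ((a, t0) \in Z); rewrite ?andbT ?andbF //.
    congr (_ || _); apply/idP/idP => [Xpa|/(H5 _ _ pR aR)//].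
    by case/orP: (H6 _ _ pR aR Xpa) => [//|/andP[_ Zta]]; case: (no2 _ _ Zat Zta).
  case Zta: ((t0, a) \in Z); rewrite ?andbF ?andFb //=.
  congr (_ || _); apply/idP/idP => [Xap|/(H5 _ _ aR pR)//].
  by case/orP: (H6 _ _ aR pR Xap) => [//|/andP[Zat _]]; case: (no2 _ _ Zat Zta).
- move=> p q; rewrite !in_elim t0a /= ?andbT.
  have Hna : ((a, t0) \in X) -> ((t0, a) \in X) -> False.
    by move: (H7 _ aR) => [-> ->] /no2 F /F.
  case/orP => [/andP[Xpt pa]|/andP[Xpa Xat]]; case/orP => [/andP[Xtq qa]|/andP[Xta Xaq]].
  + by rewrite (H8 _ _ Xpt Xtq) pa qa.
  + by rewrite (H8 _ _ Xpt Xta) Xaq orbT.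
  + by rewrite Xpa (H8 _ _ Xat Xtq) orbT.
  + by case: (Hna Xat Xta).
- move=> p; rewrite !in_elim; have [-> ->] := H9 p; have [-> _] := H9 a; have [_ ->] := H9 a.
  by rewrite !andbF.
Qed.

Lemma card_cond (S R' : {set V}) (c : bool) : (forall y, (y \in S) = c && (y \in R')) ->
  #|S| = c * #|R'|.
Proof.
move=> H; have -> : S = if c then R' else set0.
  by apply/setP => y; rewrite H; case: (c) => //; rewrite inE.
by case: (c); rewrite ?mul1n ?mul0n ?cards0.
Qed.

Lemma step_ineq R x t0 X Y Z a : inv R x t0 X Y Z -> a \notin R ->
  markowitz Y a + (#|R| - 1) * markowitz Z a <= #|R| * markowitz X a.
Proof.
move=> Hi aR; case: (Hi) => Hx Ht0 HXa HZa HXt HZt H3 H4 H5 H6 H7 H8 H9.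
have t0R : t0 \in R by move: Ht0; rewrite inE => /andP[].
have cR : #|R| = (#|R :\ x|).+1 by rewrite (cardsD1 x R) Hx.
have [E1 E2] := H7 a aR.
rewrite /markowitz -(cardsID R (Nin X a)) -(cardsID R (Nout X a)) -(cardsID R (Nin Y a))
  -(cardsID R (Nout Y a)) -(cardsID R (Nin Z a)) -(cardsID R (Nout Z a)).
rewrite (@card_cond (Nin X a :&: R) (R :\ x) ((t0, a) \in Z)); last first.
  move=> y; rewrite !inE -E2; case: (y =P x) => [->|nx]; first by rewrite (proj2 (H9 a)) Hx /= andbF.
  case yR: (y \in R) => /=; rewrite ?andbF ?andbT //.
  have yR' : y \in R :\ x by rewrite !inE yR andbT; apply/eqP.
  exact: (twin_out a (HXt _ _ yR' Ht0)).
rewrite (@card_cond (Nout X a :&: R) (R :\ x) ((a, t0) \in Z)); last first.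
  move=> y; rewrite !inE -E1; case: (y =P x) => [->|nx]; first by rewrite (proj1 (H9 a)) Hx /= andbF.
  case yR: (y \in R) => /=; rewrite ?andbF ?andbT //.
  have yR' : y \in R :\ x by rewrite !inE yR andbT; apply/eqP.
  exact: (twin_in a (HXt _ _ yR' Ht0)).
rewrite (@card_cond (Nin Z a :&: R) R ((t0, a) \in Z)); last first.
  move=> y; rewrite !inE; case yR: (y \in R); rewrite ?andbF ?andbT //.
  exact: (twin_out a (HZt _ _ yR t0R)).
rewrite (@card_cond (Nout Z a :&: R) R ((a, t0) \in Z)); last first.
  move=> y; rewrite !inE; case yR: (y \in R); rewrite ?andbF ?andbT //.
  exact: (twin_in a (HZt _ _ yR t0R)).
rewrite (@card_cond (Nin Y a :&: R) R false); last first.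
  by move=> y; rewrite !inE; case Hy: ((y, a) \in Y) => //; move: (H3 _ _ Hy) => /andP[/negbTE -> _].
rewrite (@card_cond (Nout Y a :&: R) R false); last first.
  by move=> y; rewrite !inE; case Hy: ((a, y) \in Y) => //; move: (H3 _ _ Hy) => /andP[_ /negbTE ->].
have -> : Nin Y a :\: R = Nin X a :\: R.
  by apply/setP => y; rewrite !in_setD !in_set; case yR: (y \in R) => //=; rewrite H4 ?yR.
have -> : Nout Y a :\: R = Nout X a :\: R.
  by apply/setP => y; rewrite !in_setD !in_set; case yR: (y \in R) => //=; rewrite H4 ?yR.
have Sf : Nin Z a :\: R \subset Nin X a :\: R.
  apply/subsetP => y; rewrite !in_setD !in_set => /andP[yR Hy]; rewrite yR /=; exact: H5.
have Sg : Nout Z a :\: R \subset Nout X a :\: R.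
  apply/subsetP => y; rewrite !in_setD !in_set => /andP[yR Hy]; rewrite yR /=; exact: H5.
have neh : ~~ (((t0, a) \in Z) && ((a, t0) \in Z)).
  by apply/negP => /andP[P Q]; apply: (acyc_no2 HZa P Q).
move: (subset_leq_card Sf) (subset_leq_card Sg) neh; rewrite cR subSS subn0 !mul0n !add0n.
move: #|Nin Z a :\: R| #|Nin X a :\: R| #|Nout Z a :\: R| #|Nout X a :\: R| #|R :\ x|.
move: ((t0, a) \in Z) ((a, t0) \in Z) => e h f0 f1 g0 g1 n Hf Hg Heh.
move: (arith n Hf Hg Heh); rewrite !(addnC _ f1) !(addnC _ f0) !(addnC _ g1) !(addnC _ g0).
done.
Qed.

Lemma cost_cons G v s : cost G (v :: s) = markowitz G v + cost (elim G v) s.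
Proof. by []. Qed.

Lemma gen R x t0 r0 b : perm_eq (t0 :: r0) (enum (R :\ x)) ->
  forall al X Y Z, inv R x t0 X Y Z -> (forall a, a \in al -> a \notin R) ->
  cost Y (al ++ b) + (#|R| - 1) * cost Z (al ++ x :: t0 :: r0 ++ b)
    <= #|R| * cost X (al ++ t0 :: r0 ++ b).
Proof.
move=> Hp; elim=> [|a al IH] X Y Z Hi Hal; last first.
  have aR : a \notin R by apply: Hal; rewrite inE eqxx.
  have Hi' := inv_elim Hi aR.
  have Hal' : forall a', a' \in al -> a' \notin R by move=> a' Ha'; apply: Hal; rewrite inE Ha' orbT.
  have := IH _ _ _ Hi' Hal'.
  have := step_ineq Hi aR.
  move=> H1 H2; rewrite !cat_cons !cost_cons !mulnDr addnACA.
  exact: leq_add.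
case: (Hi) => Hx Ht0 HXa HZa HXt HZt H3 H4 H5 H6 H7 H8 H9.
have t0R : t0 \in R by move: Ht0; rewrite inE => /andP[].
have memX : forall u, (u \in t0 :: r0) = (u \in R :\ x) by move=> u; rewrite (perm_mem Hp) mem_enum.
have memZ : forall u, (u \in x :: t0 :: r0) = (u \in R).
  move=> u; rewrite in_cons memX !inE; case: (u =P x) => [->|] //=; by rewrite Hx.
have uX : uniq (t0 :: r0) by rewrite (perm_uniq Hp) enum_uniq.
have uZ : uniq (x :: t0 :: r0) by rewrite /= -/(uniq (t0 :: r0)) uX memX !inE eqxx.
have [cX fX] := @elim_twins X t0 r0 b uX
  (fun u v Hu Hv => HXt u v (etrans (esym (memX u)) Hu) (etrans (esym (memX v)) Hv))
  (fun u _ => acyc_noloop u HXa).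
have [cZ fZ] := @elim_twins Z x (t0 :: r0) b uZ
  (fun u v Hu Hv => HZt u v (etrans (esym (memZ u)) Hu) (etrans (esym (memZ v)) Hv))
  (fun u _ => acyc_noloop u HZa).
have nRX1 : forall p, (p, t0) \in X -> p \notin R.
  move=> p Hpt; apply/negP => pR; case: (p =P x) => [E|/eqP nx].
    by move: Hpt; rewrite E (proj2 (H9 t0)).
  have pR' : p \in R :\ x by rewrite !inE nx pR.
  by move: Hpt; rewrite (twin_in p (HXt _ _ Ht0 pR')) acyc_noloop.
have nRX2 : forall p, (t0, p) \in X -> p \notin R.
  move=> p Hpt; apply/negP => pR; case: (p =P x) => [E|/eqP nx].
    by move: Hpt; rewrite E (proj1 (H9 t0)).
  have pR' : p \in R :\ x by rewrite !inE nx pR.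
  by move: Hpt; rewrite (twin_out p (HXt _ _ Ht0 pR')) acyc_noloop.
have nRZ1 : forall p, (p, t0) \in Z -> p \notin R.
  move=> p Hpt; apply/negP => pR.
  by move: Hpt; rewrite (twin_in p (HZt _ _ t0R pR)) acyc_noloop.
have nRZ2 : forall p, (t0, p) \in Z -> p \notin R.
  move=> p Hpt; apply/negP => pR.
  by move: Hpt; rewrite (twin_out p (HZt _ _ t0R pR)) acyc_noloop.
have nRX : forall p q, (p, q) \in X -> p \notin R :\ x -> q \notin R :\ x -> (p \notin R) && (q \notin R).
  move=> p q Hpq Hp' Hq'; apply/andP; split.
    case: (p =P x) => [E|/eqP nx]; first by move: Hpq; rewrite E (proj2 (H9 q)).
    by move: Hp'; rewrite !inE nx.
  case: (q =P x) => [E|/eqP nx]; first by move: Hpq; rewrite E (proj1 (H9 p)).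
  by move: Hq'; rewrite !inE nx.
have EX : elim_seq X (t0 :: r0) = Y.
  apply/setP => [[p q]]; rewrite fX !memX; apply/idP/idP.
    case/orP => [/andP[/andP[Hpq Hp'] Hq']|/andP[Hpt Htq]].
      by case/andP: (nRX _ _ Hpq Hp' Hq') => pR qR; rewrite H4.
    by rewrite H4 ?(nRX1 _ Hpt) ?(nRX2 _ Htq) // (H8 _ _ Hpt Htq).
  move=> Hy; case/andP: (H3 _ _ Hy) => pR qR; move: Hy; rewrite H4 // => ->.
  by rewrite !inE (negbTE pR) (negbTE qR) !andbF.
have EZ : elim_seq Z (x :: t0 :: r0) = Y.
  apply/setP => [[p q]]; rewrite fZ !memZ (twin_in p (HZt _ _ Hx t0R)) (twin_out q (HZt _ _ Hx t0R)).
  apply/idP/idP.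
    case/orP => [/andP[/andP[Hpq pR] qR]|/andP[Hpt Htq]].
      by rewrite H4 //; apply: H5.
    have pR := nRZ1 _ Hpt; have qR := nRZ2 _ Htq.
    rewrite H4 //; apply: H8; first by rewrite (proj1 (H7 _ pR)).
    by rewrite (proj2 (H7 _ qR)).
  move=> Hy; case/andP: (H3 _ _ Hy) => pR qR; move: Hy; rewrite H4 // => Hpq.
  by case/orP: (H6 _ _ pR qR Hpq) => [->|->]; rewrite ?pR ?qR ?orbT.
have EN : Nin Z x = Nin X t0.
  apply/setP => y; rewrite !in_set (twin_in y (HZt _ _ Hx t0R)).
  case yR: (y \in R); last by rewrite (proj1 (H7 y (negbT yR))).
  apply/idP/idP => [/nRZ1|/nRX1]; by rewrite yR.
have EO : Nout Z x = Nout X t0.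
  apply/setP => y; rewrite !in_set (twin_out y (HZt _ _ Hx t0R)).
  case yR: (y \in R); last by rewrite (proj2 (H7 y (negbT yR))).
  apply/idP/idP => [/nRZ2|/nRX2]; by rewrite yR.
have cR : #|R| = (size r0).+2.
  rewrite (cardsD1 x R) Hx cardE -(perm_size Hp) //.
rewrite !cat0s cX cZ EX EZ /markowitz EN EO cR.
change (size (t0 :: r0)) with (size r0).+1.
move: (size r0) (#|Nin X t0| * #|Nout X t0|) (cost Y b) => n M c.
rewrite subSS subn0; nia.
Qed.

Lemma key G R x t0 r0 al b : acyclic G ->
  (forall u v, u \in R -> v \in R -> false_twins G u v) -> x \in R ->
  perm_eq (t0 :: r0) (enum (R :\ x)) -> (forall a, a \in al -> a \notin R) ->
  cost G (x :: t0 :: r0 ++ al ++ b) + (#|R| - 1) * cost G (al ++ x :: t0 :: r0 ++ b)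
    <= #|R| * cost G (x :: al ++ t0 :: r0 ++ b).
Proof.
move=> HGa HGt Hx Hp Hal.
have memX : forall u, (u \in t0 :: r0) = (u \in R :\ x) by move=> u; rewrite (perm_mem Hp) mem_enum.
have memZ : forall u, (u \in x :: t0 :: r0) = (u \in R).
  move=> u; rewrite in_cons memX !inE; case: (u =P x) => [->|] //=; by rewrite Hx.
have Ht0 : t0 \in R :\ x by rewrite -memX inE eqxx.
have t0R : t0 \in R by move: Ht0; rewrite inE => /andP[].
have t0x : t0 != x by move: Ht0; rewrite !inE => /andP[].
have uX : uniq (t0 :: r0) by rewrite (perm_uniq Hp) enum_uniq.
have uZ : uniq (x :: t0 :: r0) by rewrite /= -/(uniq (t0 :: r0)) uX memX !inE eqxx.
have noadj : forall u v, u \in R -> v \in R -> ((u, v) \in G) = false.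
  by move=> u v Hu Hv; rewrite (twin_in u (HGt v u Hv Hu)) acyc_noloop.
have [cZ fZ] := @elim_twins G x (t0 :: r0) (al ++ b) uZ
  (fun u v Hu Hv => HGt u v (etrans (esym (memZ u)) Hu) (etrans (esym (memZ v)) Hv))
  (fun u _ => acyc_noloop u HGa).
set X := elim G x.
have HXa : acyclic X by apply: acyclic_elim.
have HXt : forall u v, u \in R :\ x -> v \in R :\ x -> false_twins X u v.
  move=> u v; rewrite !inE => /andP[ux uR] /andP[vx vR]; apply: twins_elim.
  - exact: HGt.
  - by rewrite eq_sym.
  - by rewrite eq_sym.
have [cX fX] := @elim_twins X t0 r0 b uX
  (fun u v Hu Hv => HXt u v (etrans (esym (memX u)) Hu) (etrans (esym (memX v)) Hv))
  (fun u _ => acyc_noloop u HXa).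
have H9 : forall a, ((a, x) \in X) = false /\ ((x, a) \in X) = false.
  by move=> a; rewrite !in_elim eqxx !andbF (acyc_noloop x HGa) /= andbF.
have xt0 : ((x, t0) \in G) = false by apply: noadj.
have t0x' : ((t0, x) \in G) = false by apply: noadj.
have H7 : forall a, a \notin R -> ((a, t0) \in X) = ((a, t0) \in G) /\ ((t0, a) \in X) = ((t0, a) \in G).
  move=> a aR; have ax : a != x by apply/eqP => E; move: aR; rewrite E Hx.
  by rewrite !in_elim ax t0x xt0 t0x' /= !andbT !andbF !orbF.
have Xt1 : forall p, (p, t0) \in X -> ((p, t0) \in G) && (p != x).
  by move=> p; rewrite in_elim xt0 andbF orbF t0x andbT.
have Xt2 : forall q, (t0, q) \in X -> ((t0, q) \in G) && (q != x).
  by move=> q; rewrite in_elim t0x' andFb orbF t0x andbT.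
have H8 : forall p q, (p, t0) \in X -> (t0, q) \in X -> (p, q) \in X.
  move=> p q /Xt1/andP[Hp1 _] /Xt2/andP[Hq1 _].
  by rewrite in_elim (twin_in p (HGt _ _ Hx t0R)) Hp1 (twin_out q (HGt _ _ Hx t0R)) Hq1 orbT.
have nRX1 : forall p, (p, t0) \in X -> p \notin R.
  move=> p Hpt; apply/negP => pR; case: (p =P x) => [E|/eqP nx].
    by move: Hpt; rewrite E (proj2 (H9 t0)).
  have pR' : p \in R :\ x by rewrite !inE nx pR.
  by move: Hpt; rewrite (twin_in p (HXt _ _ Ht0 pR')) acyc_noloop.
have nRX2 : forall p, (t0, p) \in X -> p \notin R.
  move=> p Hpt; apply/negP => pR; case: (p =P x) => [E|/eqP nx].
    by move: Hpt; rewrite E (proj1 (H9 t0)).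
  have pR' : p \in R :\ x by rewrite !inE nx pR.
  by move: Hpt; rewrite (twin_out p (HXt _ _ Ht0 pR')) acyc_noloop.
have nRX : forall p q, (p, q) \in X -> p \notin R :\ x -> q \notin R :\ x -> (p \notin R) && (q \notin R).
  move=> p q Hpq Hp' Hq'; apply/andP; split.
    case: (p =P x) => [E|/eqP nx]; first by move: Hpq; rewrite E (proj2 (H9 q)).
    by move: Hp'; rewrite !inE nx.
  case: (q =P x) => [E|/eqP nx]; first by move: Hpq; rewrite E (proj1 (H9 p)).
  by move: Hq'; rewrite !inE nx.
have Hi : inv R x t0 X (elim_seq X (t0 :: r0)) G.
  split => //.
  - move=> p q; rewrite fX !memX => /orP[/andP[/andP[Hpq Hp'] Hq']|/andP[Hpt Htq]].
      exact: nRX.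
    by rewrite nRX1 ?nRX2.
  - move=> p q pR qR; rewrite fX !memX; apply/idP/idP.
      case/orP => [/andP[/andP[Hpq _] _]|/andP[Hpt Htq]]; [exact: Hpq | exact: H8 Hpt Htq].
    by move=> Hpq; rewrite Hpq /= !inE (negbTE pR) (negbTE qR) !andbF.
  - move=> p q pR qR Hpq; rewrite in_elim Hpq.
    have px : p != x by apply/eqP => E; move: pR; rewrite E Hx.
    have qx : q != x by apply/eqP => E; move: qR; rewrite E Hx.
    by rewrite px qx.
  - move=> p q pR qR; rewrite in_elim => /orP[/andP[/andP[-> _] _]//|/andP[Hpx Hxq]].
    by rewrite -(twin_in p (HGt _ _ Hx t0R)) -(twin_out q (HGt _ _ Hx t0R)) Hpx Hxq orbT.
have Hal' := @gen R x t0 r0 b Hp al _ _ _ Hi Hal.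
have cR : #|R| = (size r0).+2.
  by rewrite (cardsD1 x R) Hx cardE -(perm_size Hp).
have -> : cost G (x :: t0 :: r0 ++ al ++ b) = cost G ((x :: t0 :: r0) ++ (al ++ b)) by [].
move: Hal'; rewrite cZ cost_cons -/X.
have -> : elim_seq G (x :: t0 :: r0) = elim_seq X (t0 :: r0) by [].
rewrite cR.
change (size (t0 :: r0)) with (size r0).+1.
move: (size r0) (markowitz G x) (cost (elim_seq X (t0 :: r0)) (al ++ b)) => n M c.
rewrite subSS subn0 => H.
rewrite mulnDr addnAC -addnA leq_add2l.
by rewrite addnC.
Qed.

Lemma main_ind G R s : acyclic G ->
  (forall u v, u \in R -> v \in R -> false_twins G u v) -> uniq s ->
  (forall y, y \in R -> y \in s) ->
  exists s', [/\ perm_eq s' s, cost G s' <= cost G s &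
    exists s1 s2 s3 : seq V, s' = s1 ++ s2 ++ s3 /\ perm_eq s2 (enum R)].
Proof.
elim: s G R => [|x s0 IH] G R HGa HGt Hu HR.
  exists [::]; split => //; exists [::], [::], [::]; split => //.
  apply: uniq_perm => //; first exact: enum_uniq.
  by move=> y; rewrite mem_enum; apply/esym/negP => /HR.
case/andP: Hu => xs0 Hu0.
have HR0 : forall y, y \in R -> y != x -> y \in s0.
  by move=> y /HR; rewrite inE => /orP[/eqP->|//]; rewrite eqxx.
case xR: (x \in R); last first.
  have nx : forall u, u \in R -> x != u by move=> u Hu; apply/eqP => E; move: xR; rewrite E Hu.
  have nx' : forall y, y \in R -> y != x by move=> y Hy; rewrite eq_sym; exact: nx.
  have [s0' [Hp Hc [s1 [s2 [s3 [E Hp2]]]]]] := IH (elim G x) R (acyclic_elim (w:=x) HGa)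
    (fun u v Hu Hv => twins_elim (HGt u v Hu Hv) (nx u Hu) (nx v Hv))
    Hu0 (fun y Hy => HR0 y Hy (nx' y Hy)).
  exists (x :: s0'); split.
  - by rewrite perm_cons.
  - by rewrite !cost_cons leq_add2l.
  - by exists (x :: s1), s2, s3; rewrite E.
case: (set_0Vmem (R :\ x)) => [R0|[t Ht]].
  exists (x :: s0); split => //; exists [::], [:: x], s0; split => //.
  apply: uniq_perm => //; first exact: enum_uniq.
  move=> y; rewrite mem_enum inE; case: (y =P x) => [->|/eqP yx]; first by rewrite xR.
  apply/esym/negP => yR; have : y \in R :\ x by rewrite !inE yx yR.
  by rewrite R0 inE.
have HGt' : forall u v, u \in R :\ x -> v \in R :\ x -> false_twins (elim G x) u v.
  move=> u v; rewrite !inE => /andP[ux uR] /andP[vx vR]; apply: twins_elim.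
  - exact: HGt.
  - by rewrite eq_sym.
  - by rewrite eq_sym.
have HR' : forall y, y \in R :\ x -> y \in s0.
  by move=> y; rewrite !inE => /andP[yx yR]; apply: HR0.
have [s0' [Hp Hc [s1 [s2 [s3 [E Hp2]]]]]] := IH (elim G x) (R :\ x) (acyclic_elim (w:=x) HGa) HGt' Hu0 HR'.
case: s2 E Hp2 => [|t0 r0] E Hp2.
  by move: Ht; rewrite -(mem_enum (R :\ x)) -(perm_mem Hp2).
have us0' : uniq s0' by rewrite (perm_uniq Hp).
have Hal : forall a, a \in s1 -> a \notin R.
  move=> a Ha; apply/negP => aR.
  case: (a =P x) => [Ea|/eqP ax].
    by move: xs0; rewrite -(perm_mem Hp) E mem_cat -Ea Ha.
  have : a \in t0 :: r0 by rewrite (perm_mem Hp2) mem_enum !inE ax aR.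
  move: us0'; rewrite E cat_uniq => /and3P[_ /hasPn H _] Hr.
  by move: (H a); rewrite mem_cat Hr => /(_ isT); rewrite Ha.
have K := @key G R x t0 r0 s1 s3 HGa HGt xR Hp2 Hal.
have HcX : cost G (x :: s1 ++ t0 :: r0 ++ s3) <= cost G (x :: s0).
  by rewrite -E !cost_cons leq_add2l.
have memX : forall u, (u \in t0 :: r0) = (u \in R :\ x) by move=> u; rewrite (perm_mem Hp2) mem_enum.
have Hblk : perm_eq (x :: t0 :: r0) (enum R).
  apply: uniq_perm; last 1 first.
  - move=> u; rewrite mem_enum in_cons memX !inE; case: (u =P x) => [->|] //=; by rewrite xR.
  - by rewrite /= -/(uniq (t0 :: r0)) (perm_uniq Hp2) enum_uniq memX !inE eqxx.
  - exact: enum_uniq.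
have HpX : perm_eq (x :: s1 ++ t0 :: r0 ++ s3) (x :: s0) by rewrite perm_cons -E.
have R2 : 2 <= #|R|.
  rewrite (cardsD1 x R) xR add1n ltnS card_gt0; apply/set0Pn; by exists t.
case: (leqP (cost G (x :: t0 :: r0 ++ s1 ++ s3)) (cost G (x :: s1 ++ t0 :: r0 ++ s3))) => HY.
  exists (x :: t0 :: r0 ++ s1 ++ s3); split.
  - apply: perm_trans HpX; rewrite perm_cons.
    by rewrite -(perm_catCA s1 (t0 :: r0) s3).
  - exact: leq_trans HY HcX.
  - by exists [::], (x :: t0 :: r0), (s1 ++ s3).
exists (s1 ++ x :: t0 :: r0 ++ s3); split.
- apply: perm_trans HpX.
  by rewrite (perm_catCA s1 [:: x] (t0 :: r0 ++ s3)).
- apply: leq_trans HcX.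
  move: K HY; move: (cost G (x :: t0 :: r0 ++ s1 ++ s3)) (cost G (s1 ++ x :: t0 :: r0 ++ s3))
    (cost G (x :: s1 ++ t0 :: r0 ++ s3)) => cy cz cx K HY.
  move: R2 K; case: #|R| => [|[|m]] //= _; rewrite subSS subn0 => K.
  nia.
- by exists s1, (x :: t0 :: r0), s3.
Qed.

Lemma argmin (L : seq (seq V)) (f : seq V -> nat) s0 : s0 \in L ->
  exists2 s, s \in L & forall s', s' \in L -> f s <= f s'.
Proof.
move=> H0.
have ex : exists n, has (fun s => f s == n) L by exists (f s0); apply/hasP; exists s0.
case: (ex_minnP ex) => n /hasP[s Hs /eqP Efs] Hmin.
exists s => // s' Hs'; rewrite Efs; apply: Hmin; apply/hasP; exists s' => //.
Qed.

End Aux.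


Theorem proposition2 (V : finType) (A : {set V * V}) (I T : {set V}) :
  acyclic A ->
  T \subset I ->
  (forall u v, u \in T -> v \in T -> false_twins A u v) ->
  exists s : seq V,
    [/\ total_seq I s,
        (forall s' : seq V, total_seq I s' -> cost A s <= cost A s')
      & exists s1 s2 s3 : seq V, s = s1 ++ s2 ++ s3 /\ perm_eq s2 (enum T)].
Proof.
move=> HA HTI HT.
have H0 : enum I \in permutations (enum I) by rewrite mem_permutations perm_refl.
have [s0 Hs0 Hmin] := @argmin V (permutations (enum I)) (cost A) (enum I) H0.
rewrite mem_permutations in Hs0.
have Hu : uniq s0 by rewrite (perm_uniq Hs0) enum_uniq.
have Hsub : forall y, y \in T -> y \in s0 by move=> y Hy; rewrite (perm_mem Hs0) mem_enum (subsetP HTI y Hy).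
have [s' [Hp Hc Hblk]] := @main_ind V A T s0 HA HT Hu Hsub.
exists s'; split => //.
- exact: perm_trans Hp Hs0.
- move=> s'' Hs''; apply: leq_trans Hc _; apply: Hmin.
  by rewrite mem_permutations.
Qed.
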